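(* Let $(\mathcal{B}_1,\mathcal{B}_0)$ be a Rota-Baxter operator on a crossed module of Lie groups $(H,G,t,\Phi)$ and let $\mathcal{C}$ be the small category associated with $(H,G,t,\Phi)$. Define $\mathcal{B}:G\times H\to G\times H$ by $$\mathcal{B}(a,p)=\Big(\mathcal{B}_0(a),\ \Phi(\mathcal{B}_0(a))\,\mathcal{B}_1\big(\Phi(\mathcal{B}_0(a)^{-1}a^{-1})p\big)\Big).$$ Then $F=(\mathcal{B},\mathcal{B}_0)$, acting by $\mathcal{B}_0$ on objects and by $\mathcal{B}$ on morphisms, is a functor from $\mathcal{C}$ to $\mathcal{C}$.
   Context: A crossed module of Lie groups is a quadruple $(H,G,t,\Phi)$ where $H,G$ are Lie groups, $t:H\to G$ is a Lie group homomorphism and $\Phi:G\to\mathrm{Aut}(H)$ is a smooth action of $G$ on $H$ by automorphisms such that $\Phi(t(p))q=pqp^{-1}$ and $t(\Phi(a)p)=a\,t(p)\,a^{-1}$ for all $p,q\in H$, $a\in G$. A Rota-Baxter operator on a Lie group $G$ is a smooth map $\mathcal{B}:G\to G$ with $\mathcal{B}(a)\mathcal{B}(b)=\mathcal{B}(a\mathcal{B}(a)b\mathcal{B}(a)^{-1})$ for all $a,b\in G$. A Rota-Baxter operator on a crossed module of Lie groups $(H,G,t,\Phi)$ is a pair $(\mathcal{B}_1,\mathcal{B}_0)$ of smooth maps $\mathcal{B}_1:H\to H$, $\mathcal{B}_0:G\to G$ such that (i) $\mathcal{B}_1,\mathcal{B}_0$ are Rota-Baxter operators on $H$, $G$; (ii)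 $t\circ\mathcal{B}_1=\mathcal{B}_0\circ t$; (iii) $\Phi(\mathcal{B}_0(a))\mathcal{B}_1(p)=\mathcal{B}_1\big(\Phi(a\mathcal{B}_0(a))(p\mathcal{B}_1(p))\cdot\Phi(\mathcal{B}_0(a))\mathcal{B}_1(p)^{-1}\big)$ for all $a\in G,p\in H$. The small category $\mathcal{C}$ associated with $(H,G,t,\Phi)$: objects $\mathcal{C}_0=G$, morphisms $\mathcal{C}_1=G\times H$, source $\mathfrak{s}(a,p)=a$, target $\mathfrak{t}(a,p)=t(p)a$, composition $(a,p)\circ(b,q)=(b,pq)$ whenever $t(q)b=a$, identities $1_a=(a,e_H)$. *)

(* Defs.v *)
(* Lie groups are not available; we work with abstract groups. *)
Set Implicit Arguments.

Record group := Group {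
  carrier :> Type;
  gmul : carrier -> carrier -> carrier;
  ginv : carrier -> carrier;
  gone : carrier;
  gmulA : forall x y z, gmul x (gmul y z) = gmul (gmul x y) z;
  gmul1l : forall x, gmul gone x = x;
  gmul1r : forall x, gmul x gone = x;
  gmulVl : forall x, gmul (ginv x) x = gone;
  gmulVr : forall x, gmul x (ginv x) = gone
}.

Arguments gmul {g}.
Arguments ginv {g}.
Arguments gone {g}.

Definition is_hom {H G : group} (f : H -> G) : Prop :=
  forall p q : H, f (gmul p q) = gmul (f p) (f q).

Definition is_aut {H : group} (f : H -> H) : Prop :=
  is_hom f /\ (exists g : H -> H, (forall p, g (f p) = p) /\ (forall p, f (g p) = p)).

Definition crossed_module {H G : group} (t : H -> G) (Phi : G -> H -> H) : Prop :=
  is_hom t /\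
  (forall a : G, is_aut (Phi a)) /\
  (forall (a b : G) (p : H), Phi (gmul a b) p = Phi a (Phi b p)) /\
  (forall p : H, Phi gone p = p) /\
  (forall p q : H, Phi (t p) q = gmul (gmul p q) (ginv p)) /\
  (forall (a : G) (p : H), t (Phi a p) = gmul (gmul a (t p)) (ginv a)).

Definition rota_baxter {G : group} (B : G -> G) : Prop :=
  forall a b : G, gmul (B a) (B b) = B (gmul (gmul a (gmul (B a) b)) (ginv (B a))).

Definition rota_baxter_cm {H G : group} (t : H -> G) (Phi : G -> H -> H)
  (B1 : H -> H) (B0 : G -> G) : Prop :=
  rota_baxter B1 /\ rota_baxter B0 /\
  (forall p : H, t (B1 p) = B0 (t p)) /\
  (forall (a : G) (p : H),
     Phi (B0 a) (B1 p) =
     B1 (gmul (Phi (gmul a (B0 a)) (gmul p (B1 p))) (ginv (Phi (B0 a) (B1 p))))).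

(** The small category C associated with (H, G, t, Phi):
    objects G, morphisms G * H. *)
Definition cat_src {H G : group} (t : H -> G) (f : G * H) : G := fst f.
Definition cat_tgt {H G : group} (t : H -> G) (f : G * H) : G := gmul (t (snd f)) (fst f).
Definition cat_composable {H G : group} (t : H -> G) (f g : G * H) : Prop :=
  gmul (t (snd g)) (fst g) = fst f.
Definition cat_comp {H G : group} (f g : G * H) : G * H := (fst g, gmul (snd f) (snd g)).
Definition cat_id (H : group) {G : group} (a : G) : G * H := (a, @gone H).

Definition is_functor_C {H G : group} (t : H -> G) (F0 : G -> G) (F1 : G * H -> G * H) : Prop :=
  (forall f, cat_src t (F1 f) = F0 (cat_src t f)) /\
  (forall f, cat_tgt t (F1 f) = F0 (cat_tgt t f)) /\
  (forall a : G, F1 (cat_id H a) = cat_id H (F0 a)) /\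
  (forall f g, cat_composable t f g ->
     cat_composable t (F1 f) (F1 g) /\ F1 (cat_comp f g) = cat_comp (F1 f) (F1 g)).

Definition B_mor {H G : group} (Phi : G -> H -> H) (B1 : H -> H) (B0 : G -> G)
  (f : G * H) : G * H :=
  let a := fst f in let p := snd f in
  (B0 a, Phi (B0 a) (B1 (Phi (gmul (ginv (B0 a)) (ginv a)) p))).

(* Main.v *)
Require Import Defs.

Section GL.
Variable G : group.
Lemma mulKV (x y : G) : gmul x (gmul (ginv x) y) = y.
Proof. rewrite gmulA, gmulVr, gmul1l; reflexivity. Qed.
Lemma mulVK (x y : G) : gmul (ginv x) (gmul x y) = y.
Proof. rewrite gmulA, gmulVl, gmul1l; reflexivity. Qed.
Lemma lcancel (x y z : G) : gmul x y = gmul x z -> y = z.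
Proof. intro h. rewrite <- (mulVK x y), h, mulVK; reflexivity. Qed.
Lemma inv_uniq (x y : G) : gmul x y = gone -> ginv x = y.
Proof. intro h. apply (lcancel x). rewrite gmulVr, h; reflexivity. Qed.
Lemma inv_mul (x y : G) : ginv (gmul x y) = gmul (ginv y) (ginv x).
Proof. apply inv_uniq. rewrite <- gmulA, mulKV, gmulVr; reflexivity. Qed.
Lemma inv_inv (x : G) : ginv (ginv x) = x.
Proof. apply inv_uniq. apply gmulVl. Qed.
Lemma inv_one : ginv (@gone G) = gone.
Proof. apply inv_uniq. apply gmul1l. Qed.
End GL.
Arguments lcancel {G}.

Ltac gsimp := repeat (rewrite ?inv_mul, ?inv_inv, ?inv_one;
  repeat rewrite <- gmulA; rewrite ?mulKV, ?mulVK, ?gmul1l, ?gmul1r, ?gmulVl, ?gmulVr).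

Lemma hom_one (H G : group) (f : H -> G) : is_hom f -> f gone = gone.
Proof. intro h. apply (lcancel (f gone)). rewrite <- h, !gmul1r; reflexivity. Qed.
Lemma hom_inv (H G : group) (f : H -> G) x : is_hom f -> f (ginv x) = ginv (f x).
Proof. intro h. symmetry. apply inv_uniq. rewrite <- h, gmulVr. apply hom_one; auto. Qed.

Arguments hom_one {H G f}.
Arguments hom_inv {H G f x}.
Lemma rb_one (G : group) (B : G -> G) : rota_baxter B -> B gone = gone.
Proof. intro h. apply (lcancel (B gone)). rewrite h. gsimp. reflexivity. Qed.

Theorem mainTheorem6 (H G : group) (t : H -> G) (Phi : G -> H -> H)
  (B1 : H -> H) (B0 : G -> G) :
  crossed_module t Phi ->
  rota_baxter_cm t Phi B1 B0 ->
  is_functor_C t B0 (B_mor Phi B1 B0).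
Proof.
  intros [th [Paut [Pmul [Pone [Pt tP]]]]] [RB1 [RB0 [tB _]]].
  assert (Phom : forall a, is_hom (Phi a)) by (intro a; apply (Paut a)).
  assert (Tgt : forall (a : G) (p : H),
    gmul (t (Phi (B0 a) (B1 (Phi (gmul (ginv (B0 a)) (ginv a)) p)))) (B0 a)
    = B0 (gmul (t p) a)).
  { intros a p. rewrite tP, tB, tP.
    gsimp. rewrite RB0. f_equal. gsimp. reflexivity. }
  unfold is_functor_C, cat_src, cat_tgt, cat_id, cat_composable, cat_comp, B_mor; simpl.
  split; [reflexivity|]. split; [intros [a p]; simpl; apply Tgt|]. split.
  { intro a. rewrite (hom_one (Phom _)), rb_one, (hom_one (Phom _)) by auto. reflexivity. }
  intros [a p] [b q]; simpl. intro E. subst a. split; [apply Tgt|].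
  f_equal.
  set (c := gmul (ginv (B0 b)) (ginv b)).
  set (q' := Phi c q).
  assert (Ea : B0 (gmul (t q) b) = gmul (B0 b) (t (B1 q'))).
  { rewrite <- Tgt. fold c. fold q'. rewrite tP. gsimp. reflexivity. }
  rewrite Ea, Pmul, Pt, <- (Phom (B0 b)). f_equal.
  rewrite (Phom c). fold q'.
  gsimp. rewrite RB1. f_equal.
  rewrite <- (hom_inv th), <- (hom_inv th).
  replace (gmul (ginv (B0 b)) (gmul (ginv b) (t (ginv q)))) with (gmul c (t (ginv q)))
    by (unfold c; gsimp; reflexivity).
  rewrite !Pmul, !Pt. rewrite (Phom c), (Phom c). fold q'.
  rewrite (hom_inv (Phom c)). fold q'.
  gsimp. reflexivity.
Qed.
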